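(* Let $n\ge2$, $M$ a nonderogatory $d\times d$ matrix with minimal polynomial $\mathbf p$, and $\mathcal B$ a generic maximal subalgebra of $\mathcal T_{n,d}[\mathcal P(M)]$, with $\mathbf s_+,\mathbf s_-$ as defined below. Let $A\in\mathcal B$ and polynomials $\tilde{\mathbf a}_j$, each relatively prime to $\mathbf p$, satisfy $A_j=\mathbf s_+(M)\tilde{\mathbf a}_j(M)$ for $j\ge1$ and $A_j=\mathbf s_-(M)\tilde{\mathbf a}_j(M)$ for $j\le-1$; let $\boldsymbol\gamma_1\in\mathbb C[X]$ be such that $\mathbf p$ divides $\boldsymbol\gamma_1\tilde{\mathbf a}_{1-n}-1$, and put $\boldsymbol\xi=\tilde{\mathbf a}_1\boldsymbol\gamma_1$. Then $\mathcal B=\mathfrak B(\mathbf s_+,\mathbf s_-,\boldsymbol\xi)$.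
   Context: A nonderogatory matrix is one whose minimal polynomial equals its characteristic polynomial; $\mathcal P(M)$ is the algebra of polynomials in $M$; $\mathcal T_{n,d}[\mathcal P(M)]$ is the set of $n\times n$ block Toeplitz matrices $(B_{i-j})_{i,j=0}^{n-1}$ with all $B_m\in\mathcal P(M)$. A maximal subalgebra of $\mathcal T_{n,d}[\mathcal P(M)]$ is a subalgebra contained in it, maximal under inclusion; it is generic if it is contained neither in the set of such matrices with $B_i=0$ for all $i\ge1$ nor in the set with $B_i=0$ for all $i\le-1$. For $B\in\mathcal B$ write $B_j=\mathbf b_j(M)$; $\mathbf s_+$ is the greatest common divisor of $\mathbf p$ and all $\mathbf b_j$ with $j\ge1$, $B\in\mathcal B$, and $\mathbf s_-$ that of $\mathbf p$ and all $\mathbf b_j$ with $j\le-1$, $B\in\mathcal B$ (one has $\mathbf s_+\mathbf s_-\mid\mathbf p$, and such an $A$ exists). For $\mathbf p_+,\mathbf p_-,\boldsymbol\chi$ with $\mathbf p_+\mathbf p_-\mid\mathbf p$ and $\boldsymbol\chi$ coprime to $\mathbf p$, and $\mathbf q=\mathbf p/(\mathbf p_+\mathbf p_-)$, $\mathfrak B(\mathbf p_+,\mathbf p_-,\boldsymbol\chi)$ is the set of block Toeplitz matrices $A=(A_{i-j})$ with all $A_i\in\mathcal P(M)$ such that for each $i=1,\dots,n-1$ there are polynomials $\mathbf a_i,\mathbf a_{i-n}$ with $A_i=\mathbf p_+(M)\mathbf a_i(M)$, $A_{i-n}=\mathbf p_-(M)\mathbf a_{i-n}(M)$ and $\mathbf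 q\mid\mathbf a_i-\boldsymbol\chi\mathbf a_{i-n}$. *)

(* Defs.v *)
From HB Require Import structures.
From mathcomp Require Import all_boot all_order all_algebra.
Set Implicit Arguments. Unset Strict Implicit. Unset Printing Implicit Defensive.
Import Order.TTheory GRing.Theory Num.Theory.
Local Open Scope ring_scope.

(* Entry (r, c) of an N x N matrix, given by natural-number indices;
   0 when out of range. *)
Definition mxget (R : zmodType) (N : nat) (A : 'M[R]_N) (r c : nat) : R :=
  match (insub r : option 'I_N), (insub c : option 'I_N) with
  | Some i, Some j => A i j
  | _, _ => 0
  end.

Definition blk (R : zmodType) (n d : nat) (A : 'M[R]_(n * d)) (i j : nat)
  : 'M[R]_d :=
  \matrix_(k < d, l < d) mxget A (i * d + k)%N (j * d + l)%N.

Definition block_toeplitz (R : zmodType) (n d : nat) (A : 'M[R]_(n * d)) :=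
  forall i j i' j' : nat, (i < n)%N -> (j < n)%N -> (i' < n)%N -> (j' < n)%N ->
    (i%:Z - j%:Z = i'%:Z - j'%:Z) -> blk A i j = blk A i' j'.

(* The Toeplitz coefficient B_m (m : int) of A = (B_{i-j}). *)
Definition tcoef (R : zmodType) (n d : nat) (A : 'M[R]_(n * d)) (m : int)
  : 'M[R]_d :=
  match m with
  | Posz k => blk A k 0
  | Negz k => blk A 0 k.+1
  end.

Section Toep.
Variables (C : numClosedFieldType) (n d : nat) (M : 'M[C]_d.+1).
Local Notation N := (n * d.+1)%N.
Local Notation mxset := ('M[C]_N -> Prop).

Definition inPM (X : 'M[C]_d.+1) := exists q : {poly C}, X = horner_mx M q.

Definition nonderogatory := mxminpoly M = char_poly M.

Definition Tnd (A : 'M[C]_N) :=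
  block_toeplitz A /\
  (forall i j : nat, (i < n)%N -> (j < n)%N -> inPM (blk A i j)).

Definition subalgebra (S : mxset) :=
  [/\ S 0, (forall X Y, S X -> S Y -> S (X + Y)),
      (forall (c : C) X, S X -> S (c *: X)) &
      (forall X Y, S X -> S Y -> S (X *m Y))].

Definition maximal_subalgebra (S : mxset) :=
  [/\ subalgebra S, (forall X, S X -> Tnd X) &
      (forall S' : mxset, subalgebra S' -> (forall X, S' X -> Tnd X) ->
         (forall X, S X -> S' X) -> forall X, S' X -> S X)].

Definition generic_subalg (S : mxset) :=
  ~ (forall X, S X -> forall i : nat, (0 < i)%N -> tcoef X i%:Z = 0) /\
  ~ (forall X, S X -> forall i : nat, (0 < i)%N -> tcoef X (- i%:Z) = 0).

Definition gcd_coefs (S : mxset) (sgn : bool) (s : {poly C}) :=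
  let rel g := g %| mxminpoly M /\
     (forall X (j : nat) (b : {poly C}), S X -> (0 < j < n)%N ->
        tcoef X (if sgn then j%:Z else - j%:Z) = horner_mx M b -> g %| b) in
  [/\ s \is monic, rel s & forall g, rel g -> g %| s].

Definition frakB (pp pm chi : {poly C}) (A : 'M[C]_N) :=
  let q := mxminpoly M %/ (pp * pm) in
  Tnd A /\
  forall i : nat, (1 <= i < n)%N ->
    exists ai aim : {poly C},
      [/\ tcoef A i%:Z = horner_mx M pp * horner_mx M ai,
          tcoef A (i%:Z - n%:Z) = horner_mx M pm * horner_mx M aim &
          q %| ai - chi * aim].

End Toep.

(* Main.v *)
Require Import Defs.
From HB Require Import structures.
From mathcomp Require Import all_boot all_order all_algebra.
From mathcomp Require Import zify ring.
From Stdlib Require Import ClassicalEpsilon.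
Set Implicit Arguments. Unset Strict Implicit. Unset Printing Implicit Defensive.
Import Order.TTheory GRing.Theory Num.Theory.
Local Open Scope ring_scope.

Lemma mxget_ord (R : zmodType) N (A : 'M[R]_N) (r c : 'I_N) :
  mxget A r c = A r c.
Proof. by rewrite /mxget !valK. Qed.

Lemma mxget_lt (R : zmodType) N (A : 'M[R]_N) r c (hr : (r < N)%N) (hc : (c < N)%N) :
  mxget A r c = A (Ordinal hr) (Ordinal hc).
Proof. by rewrite -mxget_ord. Qed.

Lemma mxgetD (R : zmodType) N (A B : 'M[R]_N) r c :
  mxget (A + B) r c = mxget A r c + mxget B r c.
Proof.
rewrite /mxget; case: (insub r : option 'I_N) => [i|]; case: (insub c : option 'I_N) => [j|] //=;
  by rewrite ?mxE ?addr0.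
Qed.

Lemma mxget0 (R : zmodType) N r c : mxget (0 : 'M[R]_N) r c = 0.
Proof. by rewrite /mxget; case: (insub r : option 'I_N) => [i|]; case: (insub c : option 'I_N) => [j|] //=; rewrite mxE. Qed.

Lemma mxgetZ (R : pzRingType) N (a : R) (A : 'M[R]_N) r c :
  mxget (a *: A) r c = a * mxget A r c.
Proof.
rewrite /mxget; case: (insub r : option 'I_N) => [i|]; case: (insub c : option 'I_N) => [j|] //=;
  by rewrite ?mxE ?mulr0.
Qed.

Lemma blkD (R : zmodType) n d (A B : 'M[R]_(n * d)) i j :
  blk (A + B) i j = blk A i j + blk B i j.
Proof. by apply/matrixP => k l; rewrite !mxE mxgetD. Qed.

Lemma blk0 (R : zmodType) n d i j : blk (0 : 'M[R]_(n * d)) i j = 0.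
Proof. by apply/matrixP => k l; rewrite !mxE mxget0. Qed.

Lemma blkZ (R : pzRingType) n d (a : R) (A : 'M[R]_(n * d)) i j :
  blk (a *: A) i j = a *: blk A i j.
Proof. by apply/matrixP => k l; rewrite !mxE mxgetZ. Qed.

Lemma sum_split (R : nmodType) n D (F : nat -> R) :
  \sum_(0 <= t < n * D) F t = \sum_(0 <= k < n) \sum_(0 <= l < D) F (k * D + l)%N.
Proof.
elim: n => [|n IH]; first by rewrite mul0n !big_geq.
rewrite mulSnr (big_cat_nat _ (leq_addr _ _)) //= IH big_nat_recr //=; congr (_ + _).
rewrite -[X in \sum_(X <= _ < _) _]add0n big_addn addKn.
by apply: eq_bigr => l _; rewrite addnC.
Qed.

Lemma blkM (R : pzRingType) n D (A B : 'M[R]_(n * D)) i j :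
  (i < n)%N -> (j < n)%N ->
  blk (A *m B) i j = \sum_(k < n) blk A i k *m blk B k j.
Proof.
move=> hi hj; apply/matrixP => k l.
have hr : (i * D + k < n * D)%N.
  have := ltn_ord k; move: hi; clear; nia.
have hc : (j * D + l < n * D)%N.
  have := ltn_ord l; move: hj; clear; nia.
rewrite !mxE (mxget_lt _ hr hc) mxE summxE.
transitivity (\sum_(0 <= t < n * D) mxget A (i * D + k) t * mxget B t (j * D + l)).
  by rewrite big_mkord; apply: eq_bigr => t _; rewrite -(mxget_ord A) -(mxget_ord B).
rewrite (sum_split _ _ (fun t => mxget A (i * D + k) t * mxget B t (j * D + l))) big_mkord; apply: eq_bigr => m _; rewrite mxE big_mkord.
by apply: eq_bigr => t _; rewrite !mxE.
Qed.

Lemma hm_eq (C : numClosedFieldType) d (M : 'M[C]_d.+1) (f g : {poly C}) :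
  horner_mx M f = horner_mx M g <-> mxminpoly M %| f - g.
Proof.
split=> [h|h].
  by apply: mxminpoly_min; rewrite rmorphB /= h subrr.
case/dvdpP: h => q /eqP.
rewrite subr_eq => /eqP ->.
by rewrite rmorphD rmorphM /= mx_root_minpoly mulr0 add0r.
Qed.

Lemma minpoly_neq0 (C : numClosedFieldType) d (M : 'M[C]_d.+1) : mxminpoly M != 0.
Proof. exact/monic_neq0/mxminpoly_monic. Qed.

Definition rep (C : numClosedFieldType) n d (M : 'M[C]_d.+1)
  (X : 'M[C]_(n * d.+1)) (f : int -> {poly C}) :=
  forall i j : nat, (i < n)%N -> (j < n)%N ->
    blk X i j = horner_mx M (f (i%:Z - j%:Z)).

Lemma toep_tcoef (R : zmodType) n D (X : 'M[R]_(n * D)) i j :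
  block_toeplitz X -> (i < n)%N -> (j < n)%N ->
  blk X i j = tcoef X (i%:Z - j%:Z).
Proof.
move=> hT hi hj; case: (leqP j i) => hij.
  rewrite subzn //=; apply: (hT i j (i - j)%N 0%N) => //; lia.
have -> : i%:Z - j%:Z = Negz (j - i.+1)%N by rewrite NegzE; lia.
rewrite /=; apply: (hT i j 0%N (j - i.+1).+1) => //; try lia.
Qed.

Lemma Tnd_rep (C : numClosedFieldType) n d (M : 'M[C]_d.+1) (X : 'M[C]_(n * d.+1)) :
  Tnd M X <-> exists f, rep M X f.
Proof.
split.
  move=> [hT hP].
  exists (fun m => epsilon (inhabits 0) (fun q => tcoef X m = horner_mx M q)).
  move=> i j hi hj.
  have e := toep_tcoef hT hi hj.
  rewrite e; apply: (epsilon_spec (inhabits 0) (fun q => tcoef X (i%:Z - j%:Z) = horner_mx M q)).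
  by have [q hq] := hP i j hi hj; exists q; rewrite -e.
move=> [f hf]; split.
  move=> i j i' j' hi hj hi' hj' e.
  by rewrite hf // hf // e.
by move=> i j hi hj; exists (f (i%:Z - j%:Z)); apply: hf.
Qed.

Lemma tcoef_pos (C : numClosedFieldType) n d (M : 'M[C]_d.+1) (X : 'M[C]_(n * d.+1)) f k :
  rep M X f -> (k < n)%N -> tcoef X k%:Z = horner_mx M (f k%:Z).
Proof. by move=> hf hk; rewrite /= hf //; [rewrite subr0 | lia]. Qed.

Lemma tcoef_neg (C : numClosedFieldType) n d (M : 'M[C]_d.+1) (X : 'M[C]_(n * d.+1)) f k :
  rep M X f -> (1 <= k < n)%N -> tcoef X (- k%:Z) = horner_mx M (f (- k%:Z)).
Proof.
move=> hf /andP [h1 hk]; case: k h1 hk => // k _ hk.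
have -> : - (k.+1)%:Z = Negz k by rewrite NegzE.
rewrite /= hf; [by rewrite NegzE sub0r| lia | done].
Qed.

Lemma tcoef_negn (C : numClosedFieldType) n d (M : 'M[C]_d.+1) (X : 'M[C]_(n * d.+1)) f i :
  rep M X f -> (1 <= i < n)%N -> tcoef X (i%:Z - n%:Z) = horner_mx M (f (i%:Z - n%:Z)).
Proof.
move=> hf hi; have -> : i%:Z - n%:Z = - (n - i)%N%:Z by lia.
by apply: tcoef_neg => //; lia.
Qed.

Lemma frakB_rep (C : numClosedFieldType) n d (M : 'M[C]_d.+1) (X : 'M[C]_(n * d.+1))
  (pp pm chi : {poly C}) f :
  pp * pm %| mxminpoly M -> rep M X f ->
  frakB M pp pm chi X <->
  (forall i : nat, (1 <= i < n)%N ->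
    [/\ pp %| f i%:Z, pm %| f (i%:Z - n%:Z) &
        mxminpoly M %| pm * f i%:Z - chi * pp * f (i%:Z - n%:Z)]).
Proof.
set p := mxminpoly M => hd hf.
have hpn : p != 0 by apply: minpoly_neq0.
have hppm : pp * pm != 0.
  by apply: contra hpn => /eqP h; move: hd; rewrite h dvd0p.
have hpp : pp %| p by apply: dvdp_trans hd; apply: dvdp_mulr.
have hpm : pm %| p by apply: dvdp_trans hd; apply: dvdp_mull.
have ep : p = p %/ (pp * pm) * (pp * pm) by rewrite divpK.
split.
  move=> [_ H] i hi; have [ai [aim [h1 h2 h3]]] := H i hi.
  rewrite (tcoef_pos hf) ?(andP hi).2 // -rmorphM /= in h1.
  rewrite (tcoef_negn hf hi) -rmorphM /= in h2.
  move/hm_eq: h1 => h1; move/hm_eq: h2 => h2.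
  split.
  - have -> : f i%:Z = (f i%:Z - pp * ai) + pp * ai by rewrite subrK.
    by apply: dvdp_add; [apply: dvdp_trans h1 | apply: dvdp_mulr].
  - have -> : f (i%:Z - n%:Z) = (f (i%:Z - n%:Z) - pm * aim) + pm * aim by rewrite subrK.
    by apply: dvdp_add; [apply: dvdp_trans h2 | apply: dvdp_mulr].
  have -> : pm * f i%:Z - chi * pp * f (i%:Z - n%:Z) =
    pm * (f i%:Z - pp * ai) - chi * pp * (f (i%:Z - n%:Z) - pm * aim)
    + (ai - chi * aim) * (pp * pm) by ring.
  apply: dvdp_add; first by apply: dvdp_sub; apply: dvdp_mull.
  by rewrite {1}ep; apply: dvdp_mul.
move=> H; split; first by apply/Tnd_rep; exists f.
move=> i hi; have [h1 h2 h3] := H i hi.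
exists (f i%:Z %/ pp), (f (i%:Z - n%:Z) %/ pm); split.
- by rewrite (tcoef_pos hf) ?(andP hi).2 // -rmorphM /= mulrC divpK.
- by rewrite (tcoef_negn hf hi) -rmorphM /= mulrC divpK.
rewrite -(dvdp_mul2r _ _ hppm) -ep.
have e : (f i%:Z %/ pp - chi * (f (i%:Z - n%:Z) %/ pm)) * (pp * pm) =
  pm * (f i%:Z %/ pp * pp) - chi * pp * (f (i%:Z - n%:Z) %/ pm * pm) by ring.
by rewrite e !divpK.
Qed.

Definition Sm (C : numClosedFieldType) n (fx fy : int -> {poly C}) (i j : nat) :=
  \sum_(k < n) fx (i%:Z - k%:Z) * fy (k%:Z - j%:Z).

Lemma rep_blkM (C : numClosedFieldType) n d (M : 'M[C]_d.+1) (X Y : 'M[C]_(n * d.+1)) fx fy i j :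
  rep M X fx -> rep M Y fy -> (i < n)%N -> (j < n)%N ->
  blk (X *m Y) i j = horner_mx M (Sm n fx fy i j).
Proof.
move=> hx hy hi hj; rewrite blkM // /Sm rmorph_sum /=.
by apply: eq_bigr => k _; rewrite rmorphM hx // hy.
Qed.

Lemma Sm_shift (C : numClosedFieldType) n' (fx fy : int -> {poly C}) i j :
  Sm n'.+1 fx fy i.+1 j.+1 = Sm n'.+1 fx fy i j
    + fx (i.+1)%:Z * fy (- (j.+1)%:Z) - fx (i%:Z - n'%:Z) * fy (n'%:Z - j%:Z).
Proof.
rewrite /Sm big_ord_recl big_ord_recr /=.
have -> : \sum_(k < n') fx ((i.+1)%:Z - (bump 0 k)%:Z) * fy ((bump 0 k)%:Z - (j.+1)%:Z)
  = \sum_(k < n') fx (i%:Z - k%:Z) * fy (k%:Z - j%:Z).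
  by apply: eq_bigr => k _; congr (fx _ * fy _); rewrite /bump /=; lia.
have -> : (i.+1)%:Z - 0%:Z = (i.+1)%:Z by lia.
have -> : 0%:Z - (j.+1)%:Z = - (j.+1)%:Z by lia.
set s := (\sum_(_ < n') _); ring.
Qed.

Definition cross (C : numClosedFieldType) (p : {poly C}) n (fx fy : int -> {poly C}) :=
  forall a b : nat, (1 <= a < n)%N -> (1 <= b < n)%N ->
    p %| fx a%:Z * fy (b%:Z - n%:Z) - fx (a%:Z - n%:Z) * fy b%:Z.

Lemma hm0 (C : numClosedFieldType) d (M : 'M[C]_d.+1) (f : {poly C}) :
  mxminpoly M %| f -> horner_mx M f = 0.
Proof. by move=> h; rewrite -(rmorph0 (horner_mx M)); apply/hm_eq; rewrite subr0. Qed.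

Lemma cross_shift (C : numClosedFieldType) n' d (M : 'M[C]_d.+1) fx fy i j :
  cross (mxminpoly M) n'.+1 fx fy -> (i < n')%N -> (j < n')%N ->
  horner_mx M (Sm n'.+1 fx fy i.+1 j.+1) = horner_mx M (Sm n'.+1 fx fy i j).
Proof.
move=> hc hi hj; rewrite Sm_shift -addrA rmorphD /= [X in _ + X]hm0 ?addr0 //.
have := hc i.+1 (n' - j)%N ltac:(lia) ltac:(lia).
have -> : (n' - j)%N%:Z - (n'.+1)%:Z = - (j.+1)%:Z by lia.
have -> : (i.+1)%:Z - (n'.+1)%:Z = i%:Z - n'%:Z by lia.
by have -> : (n' - j)%N%:Z = n'%:Z - j%:Z by lia.
Qed.

Lemma cross_iter (C : numClosedFieldType) n' d (M : 'M[C]_d.+1) fx fy t i j :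
  cross (mxminpoly M) n'.+1 fx fy -> (i + t < n'.+1)%N -> (j + t < n'.+1)%N ->
  horner_mx M (Sm n'.+1 fx fy (i + t) (j + t)) = horner_mx M (Sm n'.+1 fx fy i j).
Proof.
move=> hc; elim: t => [|t IH] hi hj; first by rewrite !addn0.
rewrite !addnS cross_shift //; [apply: IH|..]; lia.
Qed.

Lemma rep_mul (C : numClosedFieldType) n d (M : 'M[C]_d.+1) (X Y : 'M[C]_(n * d.+1)) fx fy :
  rep M X fx -> rep M Y fy -> cross (mxminpoly M) n fx fy ->
  rep M (X *m Y) (fun m => match m with
                           | Posz k => Sm n fx fy k 0
                           | Negz k => Sm n fx fy 0 k.+1 end).
Proof.
case: n X Y => [|n'] X Y hx hy hc i j hi hj; first by [].
rewrite (rep_blkM hx hy hi hj).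
case: (leqP j i) => hij.
  rewrite subzn //=.
  have -> : i = (i - j + j)%N by rewrite subnK.
  have e := cross_iter (t := j) (i := (i - j)%N) (j := 0%N) hc ltac:(lia) ltac:(lia).
  by rewrite add0n in e; rewrite e addnK.
have -> : i%:Z - j%:Z = Negz (j - i.+1)%N by rewrite NegzE; lia.
rewrite /=.
have e := cross_iter (t := i) (i := 0%N) (j := (j - i.+1).+1) hc ltac:(lia) ltac:(lia).
have ej : ((j - i.+1).+1 + i)%N = j by lia.
by rewrite add0n ej in e; rewrite e.
Qed.

Lemma toep_cross (C : numClosedFieldType) n d (M : 'M[C]_d.+1) (X Y : 'M[C]_(n * d.+1)) fx fy :
  rep M X fx -> rep M Y fy -> Tnd M (X *m Y) -> cross (mxminpoly M) n fx fy.
Proof.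
case: n X Y => [|n'] X Y hx hy [hT _] a b ha hb; first by lia.
case: a ha => [|i] ha; first by lia.
have e := hT i.+1 (n' - b)%N.+1 i (n' - b)%N ltac:(lia) ltac:(lia) ltac:(lia) ltac:(lia) ltac:(lia).
rewrite (rep_blkM hx hy) ?(rep_blkM hx hy) in e; try lia.
rewrite Sm_shift -addrA rmorphD /= in e.
have {}e := canRL (addKr _) e; rewrite addNr in e.
have := mxminpoly_min e.
have -> : (i.+1)%:Z - (n'.+1)%:Z = i%:Z - n'%:Z by lia.
have -> : b%:Z - (n'.+1)%:Z = - ((n' - b)%N.+1)%:Z by lia.
by have -> : b%:Z = n'%:Z - (n' - b)%N%:Z by lia.
Qed.

Definition conds (C : numClosedFieldType) (p pp pm chi : {poly C}) n (fx : int -> {poly C}) :=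
  forall i : nat, (1 <= i < n)%N ->
    [/\ pp %| fx i%:Z, pm %| fx (i%:Z - n%:Z) &
        p %| pm * fx i%:Z - chi * pp * fx (i%:Z - n%:Z)].

Lemma cross_of (C : numClosedFieldType) (p pp pm chi : {poly C}) n fx fy :
  conds p pp pm chi n fx -> conds p pp pm chi n fy -> cross p n fx fy.
Proof.
move=> hx hy a b ha hb.
have [/dvdpP [u eu] /dvdpP [u' eu'] h1] := hx a ha.
have [/dvdpP [v ev] /dvdpP [v' ev'] h2] := hy b hb.
rewrite eu eu' ev ev' in h1 h2 *.
have -> : u * pp * (v' * pm) - u' * pm * (v * pp) =
  v' * (pm * (u * pp) - chi * pp * (u' * pm)) - u' * (pm * (v * pp) - chi * pp * (v' * pm)) by ring.
by apply: dvdp_sub; apply: dvdp_mull.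
Qed.

Lemma sig_proof n i (k : 'I_n) : (0 < n)%N -> ((k + i) %% n < n)%N.
Proof. by move=> h; rewrite ltn_pmod. Qed.

Lemma sig_val n i (k : nat) : (i < n)%N -> (k < n)%N ->
  ((k + i) %% n = if (k + i < n)%N then k + i else k + i - n)%N.
Proof.
move=> hi hk; case: ifP => h.
  by rewrite modn_small //; lia.
have -> : (k + i = (k + i - n) + n)%N by lia.
by rewrite modnDr modn_small //; lia.
Qed.

Lemma sum_dvd (C : numClosedFieldType) (p : {poly C}) n (F : 'I_n -> {poly C}) :
  (forall k, p %| F k) -> p %| \sum_(k < n) F k.
Proof.
move=> h; apply: (big_ind (fun x => p %| x)).
- exact: dvdp0.
- by move=> x y; apply: dvdp_add.
- by move=> k _.
Qed.

Lemma prod_conds (C : numClosedFieldType) (p pp pm chi : {poly C}) n fx fy i :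
  conds p pp pm chi n fx -> conds p pp pm chi n fy -> (1 <= i < n)%N ->
  [/\ pp %| Sm n fx fy i 0, pm %| Sm n fx fy 0 (n - i) &
      p %| pm * Sm n fx fy i 0 - chi * pp * Sm n fx fy 0 (n - i)].
Proof.
move=> hx hy hi; split.
- apply: sum_dvd => k; have kn := ltn_ord k; rewrite subr0.
  case: (posnP k) => hk.
    by rewrite hk subr0; apply: dvdp_mulr; have [] := hx i hi.
  by apply: dvdp_mull; have [] := hy k ltac:(lia).
- apply: sum_dvd => k; have kn := ltn_ord k; case: (posnP k) => hk.
    have -> : k%:Z - (n - i)%N%:Z = i%:Z - n%:Z by lia.
    by apply: dvdp_mull; have [_ h _] := hy i hi.
  apply: dvdp_mulr; have [_ h _] := hx (n - k)%N ltac:(lia).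
  by have -> : 0%:Z - k%:Z = (n - k)%N%:Z - n%:Z by lia.
have n0 : (0 < n)%N by lia.
pose sig (k : 'I_n) : 'I_n := Ordinal (sig_proof i k n0).
have sig_inj : injective sig.
  move=> k k' /(congr1 val) /=; rewrite !sig_val //; try lia.
  have h1 := ltn_ord k; have h2 := ltn_ord k'.
  move=> e; apply: val_inj => /=; move: e; do 2 case: ifP; lia.
rewrite /Sm (reindex_inj sig_inj) /= !mulr_sumr -sumrB.
apply: sum_dvd => k; have kn := ltn_ord k; rewrite /= sig_val //; last by lia.
case: ifP => hki.
- have [_ _ h] := hy (k + i)%N ltac:(lia).
  have -> : i%:Z - (k + i)%N%:Z = 0%:Z - k%:Z by lia.
  have -> : k%:Z - (n - i)%N%:Z = (k + i)%N%:Z - n%:Z by lia.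
  rewrite subr0; set u := fx _; set v := fy _; set w := fy _.
  have -> : pm * (u * v) - chi * pp * (u * w) = u * (pm * v - chi * pp * w) by ring.
  by apply: dvdp_mull.
- have [_ _ h] := hx (n - k)%N ltac:(lia).
  have -> : i%:Z - (k + i - n)%N%:Z = (n - k)%N%:Z by lia.
  have -> : 0%:Z - k%:Z = (n - k)%N%:Z - n%:Z by lia.
  have -> : k%:Z - (n - i)%N%:Z = (k + i - n)%N%:Z - 0%:Z by lia.
  set u := fx _; set v := fy _; set w := fx _.
  have -> : pm * (u * v) - chi * pp * (w * v) = v * (pm * u - chi * pp * w) by ring.
  by apply: dvdp_mull.
Qed.

Lemma frakB_sub (C : numClosedFieldType) n d (M : 'M[C]_d.+1) (pp pm chi : {poly C}) :
  pp * pm %| mxminpoly M -> subalgebra (frakB (n := n) M pp pm chi).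
Proof.
move=> hd.
have get : forall X : 'M[C]_(n * d.+1), frakB M pp pm chi X ->
    exists f, rep M X f /\ conds (mxminpoly M) pp pm chi n f.
  move=> X hX; have [f hf] := (Tnd_rep M X).1 hX.1.
  by exists f; split => //; apply/(frakB_rep chi hd hf).
have put : forall (X : 'M[C]_(n * d.+1)) f, rep M X f -> conds (mxminpoly M) pp pm chi n f ->
    frakB M pp pm chi X.
  by move=> X f hf hc; apply/(frakB_rep chi hd hf).
split.
- apply: (put _ (fun _ => 0)).
    by move=> i j _ _; rewrite blk0 rmorph0.
  by move=> i _; rewrite !dvdp0 !mulr0 subrr dvdp0.
- move=> X Y /get [fx [hx cx]] /get [fy [hy cy]].
  apply: (put _ (fun m => fx m + fy m)).
    by move=> i j hi hj; rewrite blkD hx // hy // rmorphD.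
  move=> i hi; have [a1 a2 a3] := cx i hi; have [b1 b2 b3] := cy i hi.
  split; try by apply: dvdp_add.
  set u := fx _; set v := fy _; set w := fx _; set z := fy _.
  have -> : pm * (u + v) - chi * pp * (w + z) =
    (pm * u - chi * pp * w) + (pm * v - chi * pp * z) by ring.
  by apply: dvdp_add.
- move=> c X /get [fx [hx cx]].
  apply: (put _ (fun m => c%:P * fx m)).
    move=> i j hi hj; rewrite blkZ hx // rmorphM /= horner_mx_C.
    by rewrite -mulmxE mul_scalar_mx.
  move=> i hi; have [a1 a2 a3] := cx i hi.
  split; try by apply: dvdp_mull.
  set u := fx _; set w := fx _.
  have -> : pm * (c%:P * u) - chi * pp * (c%:P * w) = c%:P * (pm * u - chi * pp * w) by ring.
  by apply: dvdp_mull.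
- move=> X Y /get [fx [hx cx]] /get [fy [hy cy]].
  have hz := rep_mul hx hy (cross_of cx cy).
  apply: (put _ _ hz) => i hi.
  have -> : i%:Z - n%:Z = Negz (n - i.+1)%N by rewrite NegzE; lia.
  rewrite /=; have -> : (n - i.+1).+1 = (n - i)%N by lia.
  exact: prod_conds.
Qed.

Lemma exists_rep (C : numClosedFieldType) n d (M : 'M[C]_d.+1) (f : int -> {poly C}) :
  exists X : 'M[C]_(n * d.+1), rep M X f.
Proof.
have D0 : (0 < d.+1)%N by [].
exists (\matrix_(r, c) (horner_mx M (f ((r %/ d.+1)%N%:Z - (c %/ d.+1)%N%:Z)))
          (Ordinal (ltn_pmod r D0)) (Ordinal (ltn_pmod c D0))).
move=> i j hi hj; apply/matrixP => k l.
have hr : (i * d.+1 + k < n * d.+1)%N by have := ltn_ord k; nia.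
have hc : (j * d.+1 + l < n * d.+1)%N by have := ltn_ord l; nia.
rewrite !mxE (mxget_lt _ hr hc) mxE /=.
rewrite !divnMDl // !divn_small // !addn0.
congr (horner_mx M _ _ _); apply: val_inj => /=;
  by rewrite modnMDl modn_small.
Qed.

Lemma incl (C : numClosedFieldType) n d (M : 'M[C]_d.+1) (B : 'M[C]_(n * d.+1) -> Prop)
  (sp sm : {poly C}) (A : 'M[C]_(n * d.+1)) (at_ : int -> {poly C})
  (gamma1 pp w : {poly C}) :
  (2 <= n)%N ->
  subalgebra B -> (forall X, B X -> Tnd M X) ->
  gcd_coefs M B true sp -> gcd_coefs M B false sm -> B A ->
  tcoef A 1%:Z = horner_mx M sp * horner_mx M (at_ 1%:Z) ->
  tcoef A (1 - n%:Z) = horner_mx M sm * horner_mx M (at_ (1 - n%:Z)) ->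
  mxminpoly M %| gamma1 * at_ (1 - n%:Z) - 1 ->
  pp %| sp -> w * pp = sp -> pp * sm %| mxminpoly M ->
  forall Y, B Y -> frakB M pp sm (at_ 1 * gamma1 * w) Y.
Proof.
set p := mxminpoly M.
move=> hn [_ _ _ hmul] hBT [_ [_ hsp] _] [_ [_ hsm] _] hA hA1 hAn hg hpp ew hd Y hY.
have [fa ha] := (Tnd_rep M A).1 (hBT _ hA).
have [fy hy] := (Tnd_rep M Y).1 (hBT _ hY).
have hc := toep_cross ha hy (hBT _ (hmul _ _ hA hY)).
apply/(frakB_rep _ hd hy) => i hi.
have h1 : pp %| fy i%:Z.
  apply: dvdp_trans hpp _; apply: (hsp Y i) => //; try lia.
  by rewrite (tcoef_pos hy) //; lia.
have h2 : sm %| fy (i%:Z - n%:Z).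
  have e : i%:Z - n%:Z = - (n - i)%N%:Z by lia.
  rewrite e; apply: (hsm Y (n - i)%N) => //; try lia.
  by rewrite /= (tcoef_neg hy) //; lia.
split => //.
have a1 : p %| fa 1%:Z - w * pp * at_ 1%:Z.
  apply/hm_eq; rewrite -(tcoef_pos ha) //; try lia.
  by rewrite hA1 ew rmorphM.
have an : p %| fa (1 - n%:Z) - sm * at_ (1 - n%:Z).
  apply/hm_eq; rewrite -(tcoef_negn ha) //; try lia.
  by rewrite hAn rmorphM.
have cr := hc 1%N i ltac:(lia) hi.
set fa1 := fa _ in a1 cr *; set fan := fa _ in an cr *.
set y := fy i%:Z in h1 cr *; set y' := fy _ in h2 cr *.
set a1' := at_ 1%:Z in a1 *; set an' := at_ _ in an hg *.
have -> : sm * y - a1' * gamma1 * w * pp * y' =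
  - gamma1 * (fa1 * y' - fan * y) + gamma1 * y' * (fa1 - w * pp * a1')
  - gamma1 * y * (fan - sm * an') - sm * y * (gamma1 * an' - 1) by ring.
by apply: dvdp_sub; [apply: dvdp_sub; [apply: dvdp_add|]|]; apply: dvdp_mull.
Qed.

Unset Implicit Arguments.
Theorem corollary7p4 (C : numClosedFieldType) (n d : nat)
  (M : 'M[C]_d.+1) (B : 'M[C]_(n * d.+1) -> Prop)
  (sp sm : {poly C}) (A : 'M[C]_(n * d.+1)) (at_ : int -> {poly C})
  (gamma1 : {poly C}) :
  (2 <= n)%N ->
  nonderogatory M ->
  maximal_subalgebra M B ->
  generic_subalg B ->
  gcd_coefs M B true sp ->
  gcd_coefs M B false sm ->
  B A ->
  (forall j : nat, (1 <= j < n)%N ->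
     coprimep (at_ j%:Z) (mxminpoly M) /\
     tcoef A j%:Z = horner_mx M sp * horner_mx M (at_ j%:Z)) ->
  (forall j : nat, (1 <= j < n)%N ->
     coprimep (at_ (- j%:Z)) (mxminpoly M) /\
     tcoef A (- j%:Z) = horner_mx M sm * horner_mx M (at_ (- j%:Z))) ->
  mxminpoly M %| gamma1 * at_ (1 - n%:Z) - 1 ->
  forall X, B X <-> frakB M sp sm (at_ 1 * gamma1) X.
Proof.
set p := mxminpoly M.
move=> hn _ [hsub hBT hmax] _ hgp hgm hA hAp hAm hg.
have hA1 : tcoef A 1%:Z = horner_mx M sp * horner_mx M (at_ 1%:Z).
  by have [] := hAp 1%N ltac:(lia).
have hAn : tcoef A (1 - n%:Z) = horner_mx M sm * horner_mx M (at_ (1 - n%:Z)).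
  have e : 1 - n%:Z = - (n - 1)%N%:Z by lia.
  by rewrite e; have [] := hAm (n - 1)%N ltac:(lia).
have [_ [hsm_p _] _] := hgm.
have [_ [_ hsp] _] := hgp.
have hss : sp * sm %| p.
  set pp := gcdp sp (p %/ sm).
  set w := sp %/ pp.
  have hpp : pp %| sp by apply: dvdp_gcdl.
  have ew : w * pp = sp by rewrite divpK.
  have hd : pp * sm %| p.
    rewrite -[X in _ %| X](divpK hsm_p); apply: dvdp_mul => //; exact: dvdp_gcdr.
  have hinc := incl hn hsub hBT hgp hgm hA hA1 hAn hg hpp ew hd.
  have hF := hmax _ (frakB_sub n (at_ 1 * gamma1 * w) hd)
                 (fun X h => h.1) hinc.
  set q := p %/ (pp * sm).
  have [Z hZ] := exists_rep n M (fun m => if (0 < m)%R then pp * q else 0).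
  have BZ : B Z.
    apply: hF; apply/(frakB_rep _ hd hZ) => i hi.
    have -> : (0 < i%:Z)%R = true by apply/idP; lia.
    have -> : (0 < i%:Z - n%:Z)%R = false by apply/negbTE; lia.
    rewrite dvdp0 !mulr0 subr0; split => //; first by apply: dvdp_mulr.
    rewrite -[X in X %| _](divpK hd) -/q.
    by have -> : sm * (pp * q) = q * (pp * sm) by ring.
  have := hsp Z 1%N (pp * q) BZ ltac:(lia).
  rewrite (tcoef_pos hZ (ltac:(lia) : (1 < n)%N)) /=.
  move=> /(_ erefl) h.
  rewrite -[X in _ %| X](divpK hd) -/q.
  have -> : q * (pp * sm) = (pp * q) * sm by ring.
  by apply: dvdp_mul.
have hinc := incl hn hsub hBT hgp hgm hA hA1 hAn hg (dvdpp sp) (mul1r sp) hss.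
rewrite mulr1 in hinc.
have hF := hmax _ (frakB_sub n (at_ 1 * gamma1) hss) (fun X h => h.1) hinc.
by move=> X; split; [apply: hinc | apply: hF].
Qed.
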